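(* Let $\mathcal L$ be an algebraic system, $\mathbf{STop}\mathcal{L}$ the category of semitopological $\mathcal L$-structures, and let $X$ be (the domain of) a structure in $\mathbf{STop}\mathcal{L}$. Then $\mathrm{r}_{\mathcal C_1}X=X/R_{\mathcal C_1}$, where $R_{\mathcal C_1}$ is the intersection of all equivalence relations on $X$ whose equivalence classes are closed in $X$; furthermore, $R_{\mathcal C_1}$ is an $\mathcal L$-congruence on $X$.
   Context: $\mathcal C_1$ is the epireflective subcategory of $\mathbf{Top}$ consisting of $T_1$ spaces and $\mathrm{r}_{\mathcal C_1}X$ is the $T_1$-reflection of $X$ (the universal $T_1$ quotient: every continuous map from $X$ into a $T_1$ space factors uniquely through the continuous surjection $X\to\mathrm{r}_{\mathcal C_1}X$). An algebraic system $\mathcal L$ consists of constant symbols, function symbols of finite arity $\ge1$ and equations; a semitopological $\mathcal L$-structure is an $\mathcal L$-structure on a topological space with all operations separately continuous. An $\mathcal L$-congruence is an equivalence relation $R$ such that whenever $(x_i,y_i)\in R$ for $i=1,\dots,n$ and $\Phi$ is an $n$-ary operation, $(\Phi(x_1,\dots,x_n),\Phi(y_1,\dots,y_n))\in R$. *)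

(* Defs.v *)
From HB Require Import structures.
From mathcomp Require Import all_boot all_order all_algebra.
From mathcomp Require Import all_classical all_reals all_analysis.
From mathcomp Require Import generic_quotient.

Set Implicit Arguments.
Unset Strict Implicit.
Unset Printing Implicit Defensive.

Local Open Scope classical_set_scope.

(* An algebraic system: operation symbols with arities (constant symbols are
   the symbols of arity 0, function symbols those of arity >= 1) together with
   a set of equations between terms. *)
Record signature := Signature { sym : Type; arity : sym -> nat }.

Inductive term (S : signature) : Type :=
| Var : nat -> term S
| App (f : sym S) : ('I_(arity f) -> term S) -> term S.

Record algebraic_system := AlgSystem {
  sig_of :> signature;
  equations : set (term sig_of * term sig_of) }.

Definition operations (S : signature) (X : Type) :=
  forall f : sym S, ('I_(arity f) -> X) -> X.

Fixpoint eval_term (S : signature) (X : Type) (ops : operations S X)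
  (v : nat -> X) (t : term S) : X :=
  match t with
  | Var n => v n
  | App f args => ops f (fun i => eval_term ops v (args i))
  end.

Definition is_L_structure (L : algebraic_system) (X : Type)
  (ops : operations L X) : Prop :=
  forall e, @equations L e -> forall v : nat -> X,
    eval_term ops v e.1 = eval_term ops v e.2.

Definition separately_continuous (S : signature) (X : topologicalType)
  (ops : operations S X) : Prop :=
  forall (f : sym S) (a : 'I_(arity f) -> X) (i : 'I_(arity f)),
    continuous (fun x : X => ops f (fun j => if j == i then x else a j)).

Definition semitopological_L_structure (L : algebraic_system)
  (X : topologicalType) (ops : operations L X) : Prop :=
  is_L_structure ops /\ separately_continuous ops.

Definition L_congruence (S : signature) (X : Type) (ops : operations S X)
  (R : X -> X -> Prop) : Prop :=
  [/\ (forall x, R x x), (forall x y, R x y -> R y x),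
      (forall x y z, R x y -> R y z -> R x z) &
      forall (f : sym S) (a b : 'I_(arity f) -> X),
        (forall i, R (a i) (b i)) -> R (ops f a) (ops f b)].

Definition is_T1_reflection (X Y : topologicalType) (q : X -> Y) : Prop :=
  [/\ continuous q, (forall y : Y, exists x, q x = y), accessible_space Y &
      forall (Z : topologicalType) (f : X -> Z), accessible_space Z ->
        continuous f ->
        exists g : Y -> Z, [/\ continuous g, f = g \o q &
          forall g' : Y -> Z, continuous g' -> f = g' \o q -> g' = g]].

Definition closed_classes_equiv (X : topologicalType) (E : X -> X -> Prop) :=
  [/\ (forall x, E x x), (forall x y, E x y -> E y x),
      (forall x y z, E x y -> E y z -> E x z) &
      forall x, closed [set y | E x y]].

Definition R_C1 (X : topologicalType) (x y : X) : Prop :=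
  forall E : X -> X -> Prop, closed_classes_equiv E -> E x y.

Definition R_C1b (X : topologicalType) : rel X := fun x y => `[< R_C1 x y >].

Lemma R_C1_refl (X : topologicalType) (x : X) : R_C1 x x.
Proof. by move=> E; case=> r _ _ _; exact: r. Qed.

Lemma R_C1_sym (X : topologicalType) (x y : X) : R_C1 x y -> R_C1 y x.
Proof. by move=> H E hE; case: (hE) => _ s _ _; exact: s _ _ (H E hE). Qed.

Lemma R_C1_trans (X : topologicalType) (x y z : X) :
  R_C1 x y -> R_C1 y z -> R_C1 x z.
Proof.
move=> H1 H2 E hE; case: (hE) => _ _ t _; exact: (t _ _ _ (H1 E hE) (H2 E hE)).
Qed.

Lemma R_C1b_refl (X : topologicalType) : reflexive (@R_C1b X).
Proof. by move=> x; apply/asboolP; exact: R_C1_refl. Qed.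

Lemma R_C1b_sym (X : topologicalType) : symmetric (@R_C1b X).
Proof.
move=> x y; apply/idP/idP => /asboolP H; apply/asboolP; exact: R_C1_sym.
Qed.

Lemma R_C1b_trans (X : topologicalType) : transitive (@R_C1b X).
Proof.
move=> y x z /asboolP H1 /asboolP H2; apply/asboolP; exact: R_C1_trans H2.
Qed.

Definition R_C1_equiv (X : topologicalType) : equiv_rel X :=
  EquivRel (@R_C1b X) (@R_C1b_refl X) (@R_C1b_sym X) (@R_C1b_trans X).

Definition X_mod_RC1 (X : topologicalType) :=
  quotient_topology {eq_quot (R_C1_equiv X)}%qT.

Definition pi_RC1 (X : topologicalType) : X -> X_mod_RC1 X :=
  fun x => (\pi_(X_mod_RC1 X) x)%qT.

(* Main.v *)
Require Import Defs.
From HB Require Import structures.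
From mathcomp Require Import all_boot all_order all_algebra.
From mathcomp Require Import all_classical all_reals all_analysis.
From mathcomp Require Import generic_quotient.

Local Open Scope classical_set_scope.

Lemma piE {X : topologicalType} (x y : X) : pi_RC1 x = pi_RC1 y <-> R_C1 x y.
Proof.
have := eqquotP ({eq_quot (R_C1_equiv X)})%qT x y => H.
split.
  by move=> h; apply/asboolP; apply/H; exact: h.
by move=> h; apply/H; apply/asboolP.
Qed.

Lemma reprE {X : topologicalType} (y : X_mod_RC1 X) : pi_RC1 (repr y) = y.
Proof. exact: reprK. Qed.

Lemma R_C1_class_closed (X : topologicalType) (x : X) :
  closed [set z | R_C1 x z].
Proof.
have -> : [set z | R_C1 x z] =
  \bigcap_(E in (@closed_classes_equiv X)) [set z | E x z].
  apply/seteqP; split => z /=.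
    by move=> h E hE; exact: h.
  by move=> h E hE; exact: h E hE.
apply: closed_bigI => E [_ _ _ c]; exact: c.
Qed.

Lemma R_C1_cont {X Z : topologicalType} {g : X -> Z} {x y : X} :
  continuous g -> R_C1 x y -> R_C1 (g x) (g y).
Proof.
move=> cg h E hE; case: (hE) => r s t c.
apply: (h (fun u v => E (g u) (g v))); split.
- by move=> u; exact: r.
- by move=> u v; exact: s.
- by move=> u v w; exact: t.
- move=> u; have -> : [set v | E (g u) (g v)] = g @^-1` [set w | E (g u) w].
    by [].
  by apply: closed_comp => // ? _; exact: cg.
Qed.

Lemma R_C1_T1 {X Z : topologicalType} {f : X -> Z} {x y : X} :
  accessible_space Z -> continuous f -> R_C1 x y -> f x = f y.
Proof.
move=> aZ cf h.
have := R_C1_cont cf h => /(_ (fun u v => u = v)); apply; split.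
- by [].
- by move=> ? ? ->.
- by move=> ? ? ? -> ->.
- move=> u; have -> : [set v | u = v] = [set u].
    by apply/seteqP; split => v /=.
  exact: accessible_closed_set1.
Qed.

Theorem corollary3p12 (L : algebraic_system) (X : topologicalType)
  (ops : operations L X) :
  semitopological_L_structure ops ->
  is_T1_reflection (@pi_RC1 X) /\ L_congruence ops (@R_C1 X).
Proof.
move=> [_ sc]; split.
  split.
  - exact: pi_continuous.
  - by move=> y; exists (repr y); exact: reprE.
  - move=> x y xy; exists (~` [set y]); split.
    + rewrite /open /= /quotient_open.
      have -> : (\pi_(X_mod_RC1 X))%qT @^-1` (~` [set y]) =
                ~` [set z | R_C1 (repr y) z].
        apply/seteqP; split => z /=.
          move=> h1 h2; apply: h1; change (pi_RC1 z = y).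
          rewrite -[RHS]reprE; apply/piE; exact: R_C1_sym.
        move=> h1 h2; apply: h1; change (pi_RC1 z = y) in h2.
        apply: R_C1_sym; apply/piE; rewrite reprE; exact: h2.
      rewrite openC; exact: R_C1_class_closed.
    + by rewrite inE /= => e; rewrite e eqxx in xy.
    + by rewrite inE /= => /(_ erefl).
  - move=> Z f aZ cf.
    have fE : forall a b : X, pi_RC1 a = pi_RC1 b -> f a = f b.
      by move=> a b /piE; exact: R_C1_T1.
    exists (f \o repr); split.
    + apply: repr_comp_continuous => // a b /eqP h; apply/eqP; exact: fE.
    + apply/funext => x /=; apply: fE; by rewrite reprE.
    + move=> g' _ hg'; apply/funext => y /=.
      by rewrite -{1}(reprE y); have := congr1 (fun F => F (repr y)) hg' => /= ->.
split.
- exact: R_C1_refl.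
- exact: R_C1_sym.
- exact: R_C1_trans.
move=> f a b hab.
pose h (k : nat) := fun j : 'I_(arity f) => if (j < k)%N then b j else a j.
suff H : forall k, R_C1 (ops f a) (ops f (h k)).
  have -> : b = h (arity f) by apply/funext => j; rewrite /h ltn_ord.
  exact: H.
elim => [|k IH].
  have -> : h 0%N = a by apply/funext => j.
  exact: R_C1_refl.
apply: (R_C1_trans IH).
case: (ltnP k (arity f)) => hk; last first.
  have -> : h k.+1 = h k.
    apply/funext => j; rewrite /h.
    have j1 : (j < k)%N by apply: leq_trans (ltn_ord j) hk.
    by rewrite ltnS j1 (ltnW j1).
  exact: R_C1_refl.
pose i := Ordinal hk.
have E1 : h k = (fun j => if j == i then a i else h k j).
  apply/funext => j; case: eqP => // ->; by rewrite /h /= ltnn.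
have E2 : h k.+1 = (fun j => if j == i then b i else h k j).
  apply/funext => j; rewrite /h; case: eqP => [->|/eqP ne]; first by rewrite /= ltnSn.
  rewrite ltnS leq_eqVlt.
  have -> : (val j == k) = false by apply/negbTE; apply: contra ne => /eqP e; apply/eqP/val_inj.
  by [].
rewrite E2 {1}E1.
exact: (R_C1_cont (sc f (h k) i) (hab i)).
Qed.
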